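(* Let $p=p(n)\in(0,1)$ satisfy $p(n)\log n\to 0$ as $n\to\infty$, and let $G\sim D(n,p)$. Then with probability $1-o(1)$ the number of sources of $G$ is at most $5/p$.
   Context: $D(n,p)$ is the distribution on DAGs with vertex set $\{1,\dots,n\}$ assigning each DAG with $e$ edges probability proportional to $(p/(1-p))^e$. A source is a vertex with no incoming edges. *)

(* Defs.v *)
From HB Require Import structures.
From mathcomp Require Import all_boot all_order all_algebra.
From mathcomp Require Import all_classical all_reals all_analysis.
Set Implicit Arguments. Unset Strict Implicit. Unset Printing Implicit Defensive.
Import Order.TTheory GRing.Theory Num.Theory.
Local Open Scope ring_scope.

Definition digraph (n : nat) := {set 'I_n * 'I_n}.

Definition adj (n : nat) (G : digraph n) : rel 'I_n := fun u v => (u, v) \in G.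

Definition is_dag (n : nat) (G : digraph n) : bool :=
  [forall u : 'I_n, forall v : 'I_n, ~~ (adj G u v && connect (adj G) v u)].

Definition sources (n : nat) (G : digraph n) : {set 'I_n} :=
  [set v : 'I_n | [forall u : 'I_n, ~~ adj G u v]].

(* weight of a DAG under D(n,p): (p/(1-p))^(#edges) *)
Definition dag_weight (R : realType) (n : nat) (p : R) (G : digraph n) : R :=
  (p / (1 - p)) ^+ #|G|.

Definition DProb (R : realType) (n : nat) (p : R) (A : pred (digraph n)) : R :=
  (\sum_(G : digraph n | is_dag G && A G) dag_weight p G) /
  (\sum_(G : digraph n | is_dag G) dag_weight p G).

(* Main.v *)
Require Import Defs.
From HB Require Import structures.
From mathcomp Require Import all_boot all_order all_algebra.
From mathcomp Require Import all_classical all_reals all_analysis.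
From mathcomp Require Import zify ring lra.
From mathcomp Require Import fintype finset.
Import Order.TTheory GRing.Theory Num.Theory numFieldNormedType.Exports.
Set Implicit Arguments. Unset Strict Implicit. Unset Printing Implicit Defensive.

Lemma dag_of_key n (G : digraph n) (f : 'I_n -> nat) :
  (forall x y, adj G x y -> f x < f y)%N -> is_dag G.
Proof.
move=> hf; apply/forallP => u; apply/forallP => v.
apply/negP => /andP[huv /connectP[s pth lst]].
have : (f v <= f u)%N.
  clear huv; elim: s v pth lst => [|y s IH] w /=; first by move=> _ ->.
  move=> /andP[hwy pth] lst.
  have := IH y pth lst; have := hf _ _ hwy; lia.
have := hf _ _ huv; lia.
Qed.

Lemma key_of_dag n (G : digraph n) : is_dag G ->
  exists f : 'I_n -> nat, injective f /\ (forall x y, adj G x y -> f x < f y)%N.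
Proof.
move=> hG.
pose anc x := [set z | connect (adj G) z x].
exists (fun x => #|anc x| * n + x)%N; split.
  move=> x y /= hxy.
  have := congr1 (fun m => m %% n)%N hxy.
  rewrite !modnMDl !modn_small // => h; exact: val_inj.
move=> x y hxy.
have hsub : anc x \proper anc y.
  apply/properP; split.
    apply/fintype.subsetP => z; rewrite !inE => hz.
    by apply: connect_trans hz (connect1 hxy).
  exists y; first by rewrite inE connect0.
  rewrite inE; apply/negP => hyx.
  by move: hG => /forallP/(_ x)/forallP/(_ y); rewrite hxy hyx.
have := proper_card hsub.
have := ltn_ord x.
move=> h1 h2.
have : (#|anc x|.+1 * n <= #|anc y| * n)%N.
  by rewrite leq_mul2r h2 orbT.
rewrite mulSn; nia.
Qed.

Section Sums.
Variable R : comRingType.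
Local Open Scope ring_scope.

Lemma sum_subsets (X : finType) (B : {set X}) (q : R) :
  \sum_(E : {set X} | E \subset B) q ^+ #|E| = (1 + q) ^+ #|B|.
Proof.
have := @bigA_distr R 0 1 *%R +%R X (fun i => if i \in B then q else 0) (fun _ => 1).
have -> : \prod_i ((if i \in B then q else 0) + 1) = \prod_(i in B) (1 + q).
  rewrite [RHS]big_mkcond; apply: eq_bigr => i _.
  by case: (i \in B); rewrite ?add0r // addrC.
rewrite prodr_const => ->.
rewrite [LHS]big_mkcond; apply: eq_bigr => J _.
case: (boolP (J \subset B)) => hJ.
  rewrite -prodr_const [LHS]big_mkcond; apply: eq_bigr => i _.
  case: (boolP (i \in J)) => // hi.
  by rewrite (fintype.subsetP hJ _ hi).
have [i hiJ hiB] : exists2 i, i \in J & i \notin B.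
  exact/subsetPn.
by rewrite (bigD1 i) //= hiJ (negbTE hiB) mul0r.
Qed.

Lemma sum_split (X : finType) (A : {set X}) (F : {set X} -> R) :
  \sum_(G : {set X}) F G =
  \sum_(Rr : {set X} | Rr \subset ~: A) \sum_(E : {set X} | E \subset A) F (Rr :|: E).
Proof.
rewrite pair_big_dep /=.
rewrite (reindex_onto (fun p : {set X} * {set X} => p.1 :|: p.2)
                      (fun G => (G :\: A, G :&: A))) /=; last first.
  by move=> G _; rewrite setUC setID.
apply: eq_bigl => [[Rr E]] /=.
apply/eqP/andP.
  case=> <- <-; split; first by rewrite subsetDr.
  by rewrite subsetIr.
case=> h1 h2; have H1 := fintype.subsetP h1; have H2 := fintype.subsetP h2.
congr pair; apply/setP => z; rewrite !inE;
  case hR: (z \in Rr); case hE: (z \in E); case hA: (z \in A) => //=;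
  first [ by have := H1 z hR; rewrite inE hA
        | by have := H2 z hE; rewrite hA ].
Qed.
End Sums.

Definition validS n (S : {set 'I_n}) (G : digraph n) :=
  is_dag G && (S \subset sources G).

Lemma adjU n (G1 G2 : digraph n) x y : adj (G1 :|: G2) x y = adj G1 x y || adj G2 x y.
Proof. by rewrite /adj inE. Qed.

Lemma sourcesP n (G : digraph n) s : reflect (forall u, ~~ adj G u s) (s \in sources G).
Proof. by rewrite inE; apply: forallP. Qed.

Section Core.
Variables (n : nat) (v : 'I_n) (S : {set 'I_n}).
Hypothesis vS : v \notin S.
Definition UU := ~: (v |: S).
Definition Ev := [set e : 'I_n * 'I_n | (e.1 == v) || (e.2 == v)].
Definition OO := [set (v, w) | w in UU].

Lemma inU w : (w \in UU) = (w != v) && (w \notin S).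
Proof. by rewrite !inE negb_or. Qed.

Lemma L1 (Rr E : digraph n) : E \subset Ev -> validS (v |: S) (Rr :|: E) ->
  validS S Rr && (E \subset OO).
Proof.
move=> hE /andP[hG hsrc].
have hsrcP := fintype.subsetP hsrc.
apply/andP; split; first (apply/andP; split).
- have [f [_ hf]] := key_of_dag hG.
  apply: (dag_of_key (f := f)) => x y hxy; apply: hf; by rewrite adjU hxy.
- apply/fintype.subsetP => s hs; apply/sourcesP => u.
  have /sourcesP := hsrcP s (setU1r _ hs) => /(_ u).
  by rewrite adjU negb_or => /andP[].
apply/fintype.subsetP => [[a b]] hab.
have hG2 : adj (Rr :|: E) a b by rewrite adjU /adj hab orbT.
have hb : b \in UU.
  rewrite !inE; apply/negP => hb.
  have hb' : b \in v |: S by rewrite !inE.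
  by have /sourcesP /(_ a) := hsrcP b hb'; rewrite hG2.
have := fintype.subsetP hE _ hab; rewrite inE /= => /orP[/eqP ha|/eqP hbv].
  by apply/imsetP; exists b => //; rewrite ha.
by move: hb; rewrite inU hbv eqxx.
Qed.

Lemma valid_gen (Rr E : digraph n) (f : 'I_n -> nat) (c : nat) :
  Rr \subset ~: Ev -> validS S Rr -> (forall x y, adj Rr x y -> f x < f y)%N ->
  (forall e, e \in E ->
     ((e.1 == v) && (e.2 \in UU) && (c < (f e.2).*2.+2)%N) ||
     ((e.2 == v) && (e.1 \in UU) && ((f e.1).*2.+2 < c)%N)) ->
  validS S (Rr :|: E).
Proof.
move=> hR /andP[_ hsrc] hf hE.
have hRP := fintype.subsetP hR.
apply/andP; split.
  pose g x := if x == v then c else (f x).*2.+2.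
  apply: (dag_of_key (f := g)) => x y; rewrite adjU => /orP[hxy|hxy].
    have := hRP _ hxy; rewrite !inE /= negb_or => /andP[hx hy].
    rewrite /g (negbTE hx) (negbTE hy); have := hf _ _ hxy; lia.
  have := hE _ hxy; rewrite /= => /orP[/andP[/andP[/eqP hx hy] hc]|/andP[/andP[/eqP hy hx] hc]].
    move: hy; rewrite inU => /andP[hy _].
    by rewrite /g hx eqxx (negbTE hy).
  move: hx; rewrite inU => /andP[hx _].
  by rewrite /g hy eqxx (negbTE hx).
apply/fintype.subsetP => s hs; apply/sourcesP => u; rewrite adjU negb_or.
apply/andP; split; first by have /sourcesP := fintype.subsetP hsrc s hs; apply.
apply/negP => hus; have := hE _ hus; rewrite /=.
case/orP => [/andP[/andP[_ hsU] _]|/andP[/andP[/eqP hsv _] _]].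
  by move: hsU; rewrite inU hs andbF.
by move: vS; rewrite -hsv hs.
Qed.

End Core.

Section CoreSum.
Local Open Scope ring_scope.
Variables (R : realFieldType) (n : nat) (q : R).
Hypothesis hq : 0 <= q.

Definition Aw (S : {set 'I_n}) := \sum_(G : digraph n | validS S G) q ^+ #|G|.

Variables (v : 'I_n) (S : {set 'I_n}).
Hypothesis vS : v \notin S.

Lemma cardRE (Rr E : digraph n) : Rr \subset ~: Ev v -> E \subset Ev v ->
  #|Rr :|: E| = (#|Rr| + #|E|)%N.
Proof.
move=> hR hE; rewrite cardsU.
suff -> : Rr :&: E = set0 by rewrite cards0 subn0.
apply/setP => z; rewrite !inE; apply/negP => /andP[h1 h2].
by have := fintype.subsetP hR _ h1; rewrite inE (fintype.subsetP hE _ h2).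
Qed.

Lemma cardOO : #|OO v S| = #|UU v S|.
Proof. by rewrite card_imset // => a b [->]. Qed.

Lemma OO_Ev : OO v S \subset Ev v.
Proof.
apply/fintype.subsetP => e /imsetP[w _ ->]; by rewrite inE /= eqxx.
Qed.

Lemma sum_sub_cond (A B : digraph n) (F : digraph n -> R) : B \subset A ->
  \sum_(E : digraph n | E \subset A) (if E \subset B then F E else 0) = \sum_(E : digraph n | E \subset B) F E.
Proof.
move=> hBA; rewrite -big_mkcondr /=; apply: eq_bigl => E.
apply/andP/idP => [[] //|hEB]; split => //; exact: subset_trans hBA.
Qed.

Lemma innerL (Rr : digraph n) : Rr \subset ~: Ev v ->
  \sum_(E : digraph n | E \subset Ev v) (if validS (v |: S) (Rr :|: E) then q ^+ #|Rr :|: E| else 0)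
  <= (if validS S Rr then q ^+ #|Rr| * (1 + q) ^+ #|UU v S| else 0).
Proof.
move=> hR.
case: (boolP (validS S Rr)) => hv; last first.
  rewrite big1 // => E hE; case: ifP => // hv2.
  by have := L1 hE hv2; rewrite (negbTE hv).
rewrite -cardOO -sum_subsets -(sum_sub_cond _ OO_Ev) mulr_sumr.
apply: ler_sum => E hE.
case: ifP => hv2; last by case: ifP => _; rewrite ?mulr_ge0 ?exprn_ge0.
have /andP[_ ->] := L1 hE hv2.
by rewrite cardRE // exprD.
Qed.



Lemma T1 :
  \sum_(E : digraph n | E \subset Ev v) q ^+ #|E| * (E \subset OO v S)%:R
  = (1 + q) ^+ #|UU v S|.
Proof.
rewrite -cardOO -sum_subsets -(sum_sub_cond _ OO_Ev); apply: eq_bigr => E _.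
by case: ifP; rewrite ?mulr1 ?mulr0.
Qed.

Lemma arith (N : nat) : (1 + q) ^+ N * (1 + N%:R * (q / (1 + q))) =
  (1 + q) ^+ N + ((1 + q) ^+ N - (1 + q) ^+ N.-1) *+ N.
Proof.
have hq1 : 1 + q != 0 by rewrite gt_eqF // ltr_wpDr.
case: N => [|k]; first by rewrite expr0 mulr0n addr0 mul1r mul0r addr0.
rewrite exprS /= -mulr_natl; field.
exact: hq1.
Qed.

Section WithKey.
Variable f : 'I_n -> nat.
Hypothesis finj : injective f.

Definition Pu (u : 'I_n) : digraph n :=
  [set (w, v) | w in [set w in UU v S | (f w <= f u)%N]] :|:
  [set (v, w) | w in [set w in UU v S | (f u < f w)%N]].

Lemma inPu u x : (x, v) \in Pu u -> x \in UU v S -> (f x <= f u)%N.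
Proof.
rewrite inE => /orP[/imsetP[w hw [-> _]]|/imsetP[w hw [hx _]]].
  by move: hw; rewrite inE => /andP[].
by rewrite hx inU eqxx.
Qed.

Lemma Pu_Ev u : Pu u \subset Ev v.
Proof.
apply/fintype.subsetP => e; rewrite inE => /orP[] /imsetP[w _ ->];
  by rewrite inE /= eqxx ?orbT.
Qed.

Lemma uv_Pu u : u \in UU v S -> (u, v) \in Pu u.
Proof. by move=> hu; rewrite inE; apply/orP; left; apply/imsetP; exists u; rewrite // inE hu leqnn. Qed.

Lemma card_Pu u : #|Pu u| = #|UU v S|.
Proof.
rewrite cardsU.
have -> : [set (w, v) | w in [set w in UU v S | (f w <= f u)%N]] :&:
          [set (v, w) | w in [set w in UU v S | (f u < f w)%N]] = set0.
  apply/setP => e; rewrite !inE; apply/negP => /andP[/imsetP[w hw ->] /imsetP[w' _ [hw' _]]].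
  by move: hw; rewrite inE hw' inU eqxx.
rewrite cards0 subn0 !card_imset; try by move=> a b [].
rewrite -(cardsID [set w | (f w <= f u)%N] (UU v S)); congr (_ + _)%N; apply: eq_card => w.
  by rewrite !inE andbC.
by rewrite !inE -ltnNge andbC.
Qed.

Lemma pointR (Rr E : digraph n) : Rr \subset ~: Ev v -> validS S Rr ->
  (forall x y, adj Rr x y -> f x < f y)%N -> E \subset Ev v ->
  q ^+ #|Rr| * (q ^+ #|E| * ((E \subset OO v S)%:R +
     \sum_(u in UU v S) ((E \subset Pu u) && ((u, v) \in E))%:R))
  <= (if validS S (Rr :|: E) then q ^+ #|Rr :|: E| else 0).
Proof.
move=> hR hvR hf hE.
have hw : q ^+ #|Rr :|: E| = q ^+ #|Rr| * q ^+ #|E| by rewrite cardRE // exprD.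
case: (boolP (E \subset OO v S)) => hO.
  rewrite big1 ?addr0 ?mulr1; last first.
    move=> u hu; apply/eqP; rewrite pnatr_eq0 eqb0; apply/negP => /andP[_ huv].
    have /imsetP[w _ [huv' _]] := fintype.subsetP hO _ huv.
    by move: hu; rewrite huv' inU eqxx.
  rewrite (@valid_gen n v S vS Rr E f 0%N hR hvR hf) ?hw //.
  move=> e /(fintype.subsetP hO) /imsetP[w hw' ->] /=; by rewrite eqxx hw'.
rewrite add0r.
case: (pickP [pred u | (u \in UU v S) && (E \subset Pu u) && ((u, v) \in E)]) => [u /= /andP[/andP[hu hEu] huv]|hnone]; last first.
  rewrite big1 ?mulr0 ?mulr0; first by case: ifP => _; rewrite ?exprn_ge0.
  move=> u hu; have := hnone u; rewrite /= hu /= => ->; done.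
rewrite (bigD1 u) //= hEu huv /= big1 ?addr0 ?mulr1; last first.
  move=> u' /andP[hu' hne]; apply/eqP; rewrite pnatr_eq0 eqb0; apply/negP => /andP[hEu' hu'v].
  have h1 := inPu (fintype.subsetP hEu _ hu'v) hu'.
  have h2 := inPu (fintype.subsetP hEu' _ huv) hu.
  by move: hne; rewrite (finj (anti_leq (introT andP (conj h2 h1)))) eqxx.
  rewrite (@valid_gen n v S vS Rr E f (f u).*2.+3 hR hvR hf) ?hw //.
move=> e /(fintype.subsetP hEu); rewrite inE => /orP[] /imsetP[w hw' ->] /=;
  move: hw'; rewrite inE => /andP[hwU hle]; rewrite hwU eqxx /= ?orbT; lia.
Qed.


Lemma T2 u : u \in UU v S ->
  \sum_(E : digraph n | E \subset Ev v) q ^+ #|E| * ((E \subset Pu u) && ((u, v) \in E))%:R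
  = (1 + q) ^+ #|UU v S| - (1 + q) ^+ (#|UU v S|.-1).
Proof.
move=> hu.
have -> : \sum_(E : digraph n | E \subset Ev v) q ^+ #|E| * ((E \subset Pu u) && ((u, v) \in E))%:R
   = \sum_(E : digraph n | E \subset Ev v) (if E \subset Pu u then
        (if (u, v) \in E then q ^+ #|E| else 0) else 0).
  by apply: eq_bigr => E _; case: (E \subset Pu u); case: ((u, v) \in E); rewrite /= ?mulr1 ?mulr0.
rewrite (sum_sub_cond (fun E : digraph n => if (u, v) \in E then q ^+ #|E| else 0) (Pu_Ev u)) -big_mkcondr /=.
have e1 := sum_subsets (Pu u) q.
rewrite (bigID (fun E : digraph n => (u, v) \in E)) /= in e1.
have e2 : \sum_(E : digraph n | (E \subset Pu u) && ((u, v) \notin E)) q ^+ #|E|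
    = (1 + q) ^+ (#|UU v S|.-1).
  rewrite -[in RHS](card_Pu u) (cardsD1 (u, v)) uv_Pu //= -sum_subsets.
  by apply: eq_bigl => E; rewrite subsetD1.
by rewrite card_Pu e2 in e1; rewrite -e1 addrK.
Qed.

End WithKey.

Lemma innerR (Rr : digraph n) : Rr \subset ~: Ev v -> validS S Rr ->
  q ^+ #|Rr| * ((1 + q) ^+ #|UU v S| * (1 + #|UU v S|%:R * (q / (1 + q))))
  <= \sum_(E : digraph n | E \subset Ev v) (if validS S (Rr :|: E) then q ^+ #|Rr :|: E| else 0).
Proof.
move=> hR hvR.
have /andP[hd _] := hvR.
have [f [finj hf]] := key_of_dag hd.
apply: le_trans (ler_sum _ (fun E hE => pointR finj hR hvR hf hE)).
rewrite -mulr_sumr; apply: ler_wpM2l; first exact: exprn_ge0.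
under eq_bigr => E _ do rewrite mulrDr mulr_sumr.
rewrite big_split /= T1 exchange_big /=.
rewrite (eq_bigr (fun _ => (1 + q) ^+ #|UU v S| - (1 + q) ^+ (#|UU v S|.-1))); last first.
  by move=> u hu; rewrite (T2 f hu).
by rewrite sumr_const arith.
Qed.

Lemma core : Aw (v |: S) * (1 + #|UU v S|%:R * (q / (1 + q))) <= Aw S.
Proof.
rewrite /Aw !(big_mkcond (fun G => validS _ G)) !(sum_split (Ev v)) mulr_suml.
apply: ler_sum => Rr hR.
have hc : 0 <= 1 + #|UU v S|%:R * (q / (1 + q)).
  by rewrite addr_ge0 // mulr_ge0 // divr_ge0 // addr_ge0.
apply: le_trans (ler_wpM2r hc (innerL hR)) _.
case: ifP => hv; last first.
  rewrite mul0r; apply: sumr_ge0 => E _; case: ifP => _ //; exact: exprn_ge0.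
by rewrite -mulrA; apply: innerR.
Qed.

End CoreSum.

Section Iter.
Local Open Scope ring_scope.
Variables (R : realFieldType) (n : nat) (q : R).
Hypothesis hq : 0 <= q.

Definition Dk (k : nat) : R := \prod_(i < k) (1 + (n - 1 - i)%N%:R * (q / (1 + q))).

Lemma Dk_gt0 k : 0 < Dk k.
Proof.
apply: prodr_gt0 => i _; apply: lt_le_trans (ler_wpDr _ (lexx 1)) => //.
by rewrite mulr_ge0 // divr_ge0 // addr_ge0.
Qed.

Lemma iterA k (S : {set 'I_n}) : #|S| = k -> Aw q S * Dk k <= Aw q (set0 : {set 'I_n}).
Proof.
elim: k S => [|k IH] S hS.
  by rewrite (cards0_eq hS) /Dk big_ord0 mulr1.
have : S != set0 by rewrite -card_gt0 hS.
case/set0Pn => v hv.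
have hS' : #|S :\ v| = k by move: hS; rewrite (cardsD1 v) hv add1n => -[].
have vS' : v \notin S :\ v by rewrite !inE eqxx.
have hc := core hq vS'.
rewrite setD1K // in hc.
have hU : #|UU v (S :\ v)| = (n - 1 - k)%N.
  rewrite /UU setD1K // cardsCs setCK card_ord hS; lia.
rewrite hU in hc.
rewrite /Dk big_ord_recr /= -/(Dk k) mulrA.
apply: le_trans (IH _ hS').
rewrite mulrAC; apply: ler_wpM2r => //; exact: ltW (Dk_gt0 k).
Qed.
Lemma Aw0 : Aw q (set0 : {set 'I_n}) = \sum_(G : digraph n | is_dag G) q ^+ #|G|.
Proof. by apply: eq_bigl => G; rewrite /validS sub0set andbT. Qed.

Lemma sumS k : \sum_(S : {set 'I_n} | #|S| == k) Aw q S =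
  \sum_(G : digraph n | is_dag G) q ^+ #|G| * 'C(#|sources G|, k)%:R.
Proof.
rewrite /Aw; under eq_bigr => S _ do rewrite big_mkcond /=.
rewrite exchange_big /= [RHS]big_mkcond /=; apply: eq_bigr => G _.
rewrite /validS; case: (is_dag G) => /=; last by rewrite big1.
rewrite -big_mkcondr /= (eq_bigl (fun S : {set 'I_n} => S \in [set A : {set 'I_n} | A \subset sources G & #|A| == k])) => [|S]; last by rewrite !inE andbC.
by rewrite sumr_const cards_draws mulr_natr.
Qed.

Lemma prod_ffact m k : ('C(m, k) * k`!)%:R * (q / (1 + q)) ^+ k =
  \prod_(i < k) ((m - i)%N%:R * (q / (1 + q))).
Proof.
rewrite bin_ffact ffact_prod natr_prod big_split /=; congr (_ * _).
by rewrite prodr_const card_ord.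
Qed.

Lemma bad_bound k m : (forall i : 'I_k, 2 <= (m - i)%N%:R * (q / (1 + q))) ->
  (\sum_(G : digraph n | is_dag G && (m <= #|sources G|)%N) q ^+ #|G|) * 2 ^+ k
  <= Aw q (set0 : {set 'I_n}).
Proof.
move=> hm.
set p := q / (1 + q).
have hp0 : 0 <= p by rewrite divr_ge0 // addr_ge0.
have hp1 : p <= 1 by rewrite ler_pdivrMr ?mul1r ?lerDr // ltr_wpDr.
set B := \sum_(G : digraph n | is_dag G && (m <= #|sources G|)%N) q ^+ #|G|.
set Z := Aw q (set0 : {set 'I_n}).
have hB0 : 0 <= B by apply: sumr_ge0 => G _; exact: exprn_ge0.
have hZ0 : 0 <= Z by apply: sumr_ge0 => G _; exact: exprn_ge0.
have h1 : B * 'C(m, k)%:R <= \sum_(S : {set 'I_n} | #|S| == k) Aw q S.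
  rewrite sumS /B big_mkcondr mulr_suml /=; apply: ler_sum => G _.
  case: ifP => hmG; last by rewrite mul0r mulr_ge0 ?exprn_ge0.
  by apply: ler_wpM2l; [exact: exprn_ge0 | rewrite ler_nat leq_bin2l].
have h2 : (\sum_(S : {set 'I_n} | #|S| == k) Aw q S) * Dk k <= Z *+ 'C(n, k).
  rewrite mulr_suml -[n in 'C(n, _)]card_ord -card_draws -sumr_const.
  rewrite [X in _ <= X](eq_bigl (fun S : {set 'I_n} => #|S| == k)) => [|S]; last by rewrite inE.
  by apply: ler_sum => S /eqP hS; exact: iterA.
have h3 : 2 ^+ k <= ('C(m, k) * k`!)%:R * p ^+ k.
  have -> : (2 : R) ^+ k = \prod_(i < k) (2 : R) by rewrite prodr_const card_ord.
  rewrite prod_ffact.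
  by apply: ler_prod => i _; rewrite ler0n /=.
have h4 : ('C(n, k) * k`!)%:R * p ^+ k <= Dk k.
  rewrite prod_ffact /Dk; apply: ler_prod => i _; rewrite mulr_ge0 //=.
  case: (ltnP i n) => hi.
    have -> : (n - i)%N = ((n - 1 - i) + 1)%N by lia.
    by rewrite natrD mulrDl mul1r addrC lerD2r.
  have -> : (n - i)%N = 0%N by lia.
  by rewrite mul0r addr_ge0 // mulr_ge0.
have hD := Dk_gt0 k.
have hk0 : 0 <= p ^+ k by exact: exprn_ge0.
set f := k`!%:R * p ^+ k.
have hf : 0 <= f by rewrite mulr_ge0.
have h7 : B * 'C(m, k)%:R * Dk k <= Z * 'C(n, k)%:R.
  by rewrite -mulr_natr in h2; apply: le_trans h2; apply: ler_wpM2r => //; exact: ltW.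
have h8 := ler_wpM2r hf h7.
have e1 : B * 'C(m, k)%:R * Dk k * f = (B * (('C(m, k) * k`!)%:R * p ^+ k)) * Dk k.
  by rewrite /f natrM; ring.
have e2 : Z * 'C(n, k)%:R * f = Z * (('C(n, k) * k`!)%:R * p ^+ k).
  by rewrite /f natrM; ring.
rewrite e1 e2 in h8.
have h6 : B * (('C(m, k) * k`!)%:R * p ^+ k) <= Z.
  rewrite -(ler_pM2r hD); apply: le_trans h8 _; exact: ler_wpM2l.
by apply: le_trans h6; apply: ler_wpM2l.
Qed.

End Iter.

Local Open Scope ring_scope.

Lemma dag0 n : is_dag (set0 : digraph n).
Proof. by apply: (dag_of_key (f := fun _ => 0%N)) => x y; rewrite /adj inE. Qed.

Lemma per_n (R : realType) n (p : R) : 0 < p < 1 ->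
  1 - p / 2 <= DProb p (fun G : digraph n => (#|sources G|%:R : R) <= 5 / p) <= 1.
Proof.
case/andP => hp0 hp1.
set q := p / (1 - p).
have h1p : 0 < 1 - p by rewrite subr_gt0.
have hq : 0 <= q by rewrite divr_ge0 // ltW.
have hpq : q / (1 + q) = p.
  rewrite /q; field; apply/andP; split; first by rewrite gt_eqF.
  by rewrite subrK oner_eq0.
set m := Num.truncn (5 / p).
set k := Num.truncn (2 / p).
have h5 : 0 <= 5 / p by rewrite divr_ge0 // ltW.
have h2 : 0 <= 2 / p by rewrite divr_ge0 // ltW.
have hkm : (k <= m)%N by apply: le_truncn; rewrite ler_pM2r ?invr_gt0 // ler_nat.
have hm : forall i : 'I_k, 2 <= (m - i)%N%:R * (q / (1 + q)).
  move=> i; rewrite hpq.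
  have hi : (i <= m)%N by apply: leq_trans (ltnW (ltn_ord i)) hkm.
  rewrite natrB //.
  have hmS := truncnS_gt (5 / p).
  have hkle : k%:R <= 2 / p by rewrite truncn_le.
  have hik : (i.+1 <= k)%N := ltn_ord i.
  have hik' : i%:R + 1 <= k%:R :> R by rewrite -[X in X <= _](natrD R i 1) ler_nat addn1.
  rewrite -/m -addn1 natrD in hmS.
  have : 3 / p <= m%:R - i%:R.
    have -> : 3 / p = 5 / p - 2 / p by rewrite -mulrBl; congr (_ / _); lra.
    lra.
  rewrite -(ler_pM2r hp0) mulrAC -mulrA divff ?gt_eqF // mulr1 => h3.
  lra.
have hB := @bad_bound R n q hq k m hm.
set Z := Aw q (set0 : {set 'I_n}) in hB.
set B := \sum_(G : digraph n | is_dag G && (m <= #|sources G|)%N) q ^+ #|G| in hB.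
have hZ : 0 < Z.
  rewrite /Z Aw0 (bigD1 set0) ?dag0 //= cards0 expr0.
  by rewrite ltr_wpDr // sumr_ge0 // => G _; exact: exprn_ge0.
rewrite /DProb /dag_weight -/q.
have -> : \sum_(G : digraph n | is_dag G) q ^+ #|G| = Z by rewrite /Z Aw0.
set Good := \sum_(G : digraph n | is_dag G && _) _.
set Bad := \sum_(G : digraph n | is_dag G && ~~ ((#|sources G|%:R : R) <= 5 / p)) q ^+ #|G|.
have hZs : Z = Good + Bad by rewrite /Z Aw0 (bigID (fun G : digraph n => (#|sources G|%:R : R) <= 5 / p)).
have hBad0 : 0 <= Bad by apply: sumr_ge0 => G _; exact: exprn_ge0.
have hBB : Bad <= B.
  rewrite /Bad /B !big_mkcondr /=; apply: ler_sum => G _.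
  case: ifP => hg /=; last by case: ifP => _; rewrite ?exprn_ge0.
  have hlt : 5 / p < #|sources G|%:R by rewrite ltNge hg.
  have -> : (m <= #|sources G|)%N.
    rewrite -(ler_nat R); apply: ltW; apply: le_lt_trans hlt.
    by rewrite truncn_le.
  done.
have hk2 : 2 / p <= 2 ^+ k.
  have := truncnS_gt (2 / p); rewrite -/k => h.
  apply: (le_trans (ltW h)); rewrite -natrX ler_nat; exact: ltn_expl.
have hb1 : Bad * (2 / p) <= Z.
  apply: le_trans hB; apply: le_trans (_ : Bad * 2 ^+ k <= _).
    exact: ler_wpM2l.
  apply: ler_wpM2r => //; exact: exprn_ge0.
have hb2 : Bad <= Z * (p / 2).
  have -> : Bad = Bad * (2 / p) * (p / 2) by field; rewrite gt_eqF.
  by apply: ler_wpM2r => //; rewrite divr_ge0 // ltW.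
apply/andP; split.
  rewrite ler_pdivlMr //; lra.
rewrite ler_pdivrMr //; lra.
Qed.

Unset Implicit Arguments.
Local Open Scope classical_set_scope.
Local Open Scope ring_scope.

Theorem mainTheorem6 (R : realType) (p : nat -> R) :
  (forall n, 0 < p n < 1) ->
  (fun n : nat => p n * ln (n%:R : R)) @ \oo --> (0:R) ->
  (fun n : nat =>
     DProb (p n) (fun G : digraph n => (#|sources G|%:R : R) <= 5 / p n))
    @ \oo --> (1:R).
Proof.
move=> hp hl.
set c := ln (3%:R : R).
have hc : 0 < c by apply: ln_gt0; rewrite (ltr_nat R 1 3).
apply: (@squeeze_cvgr _ _ _ R (fun n => 1 - 2^-1 * (c^-1 * (p n * ln (n%:R : R)))) (fun _ => 1)).
- near=> n.
  have hn : (3 <= n)%N by near: n; exists 3%N.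
  have /andP[hp0 hp1] := hp n.
  have /andP[h1 h2] := per_n n (hp n).
  apply/andP; split => //.
  apply: le_trans h1.
  rewrite lerD2l lerN2 [X in _ <= X]mulrC ler_pM2r ?invr_gt0 // mulrC ler_pdivlMr // ler_pM2l //.
  by rewrite /c ler_ln ?posrE ?ltr0n ?ler_nat //; apply: leq_trans hn.
- have H := cvgB (cvg_cst (1:R)) (@cvgMl_tmp R _ _ _ _ (2^-1) _
                  (@cvgMl_tmp R _ _ _ _ (c^-1) _ hl)).
  rewrite !mulr0 subr0 in H.
  exact: H.
- exact: cvg_cst.
Unshelve. all: end_near.
Qed.
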